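(* In the setting of the context, the elliptic Euler–Moulton solution $q_i(t)=r(t)R(\theta(t))a_i$, $p_i=m_i\dot q_i$ ($1\le i\le n$), corresponds in the barred coordinates to the constant solution $$\xi_0:\quad \bar Z=(0,\sigma)^T,\ \bar z=(\sigma,0)^T,\ \bar W_l=\bar w_l=(0,0)^T\ (1\le l\le n-2)$$ of Hamilton's equations of $\bar H$. Moreover the Hessian $B(\theta)$ of $\bar H(\theta,\cdot)$ with respect to $(\bar Z,\bar W_1,\dots,\bar W_{n-2},\bar z,\bar w_1,\dots,\bar w_{n-2})$ at $\xi_0$ has the following $2\times2$ blocks: $\bar H_{\bar Z\bar Z}=\bar H_{\bar W_l\bar W_l}=I_2$; $\bar H_{\bar Z\bar z}=\bar H_{\bar W_l\bar w_l}=-J$; $\bar H_{\bar z\bar Z}=\bar H_{\bar w_l\bar W_l}=J$; $$\bar H_{\bar z\bar z}=\begin{pmatrix}-\frac{2-e\cos\theta}{1+e\cos\theta}&0\\0&1\end{pmatrix},\qquad \bar H_{\bar w_l\bar w_l}=\begin{pmatrix}-\frac{2\beta_l+2-e\cos\theta}{1+e\cos\theta}&0\\0&\frac{\beta_l+1+e\cos\theta}{1+e\cos\theta}\end{pmatrix}\ (1\le l\le n-2),$$ with $\beta_l=-\lambda_{l+2}/\mu$, and all other blocks (in particular $\bar H_{\bar z\bar w_l}$, $\bar H_{\bar w_l\bar w_s}$ for $l\ne s$, $\bar H_{\bar Z\bar W_l}$, $\bar H_{\bar Z\bar w_l}$, etc.) are zero. Hence the linearized Hamiltonian system at $\xi_0$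 has quadratic Hamiltonian $$H_2=\tfrac12|\bar Z|^2+\bar z\cdot J\bar Z+\tfrac12\bar z^T\bar H_{\bar z\bar z}\bar z+\sum_{l=1}^{n-2}\Big(\tfrac12|\bar W_l|^2+\bar w_l\cdot J\bar W_l+\tfrac12\bar w_l^T\bar H_{\bar w_l\bar w_l}\bar w_l\Big).$$
   Context: Masses $m_i>0$, $\sum m_i=1$; $a_i=(a_{ix},0)^T$ with $a_{1x}<\dots<a_{nx}$ the collinear central configuration normalized by $\sum m_ia_{ix}=0$, $\sum m_ia_{ix}^2=1$, satisfying $\sum_{j\ne i}m_j(a_{jx}-a_{ix})/|a_{jx}-a_{ix}|^3=\mu a_{ix}$, $\mu=\sum_{i<j}m_im_j/|a_{ix}-a_{jx}|$. $\tilde M=\mathrm{diag}(m_i)$, $B_{ij}=m_im_j/|a_{ix}-a_{jx}|^3$ ($i\ne j$), $B_{ii}=-\sum_{j\ne i}B_{ij}$, $D=\mu I_n+\tilde M^{-1}B$ with eigenvalues $\mu>0\ge\lambda_3\ge\dots\ge\lambda_n$ (besides $\mu$ and $0$), and eigenvectors $v_k=(b_{1k},\dots,b_{nk})^T$ for $\lambda_k$ ($3\le k\le n$) with $v_i^T\tilde Mv_j=\delta_{ij}$ together with $v_1=(1,\dots,1)^T$, $v_2=(a_{1x},\dots,a_{nx})^T$. $U(z,w_1,\dots,w_{n-2})=\sum_{i<j}m_im_j/|(a_{ix}-a_{jx})z+\sum_{k=3}^n(b_{ik}-b_{jk})w_{k-2}|$. $e\in[0,1)$, $p>0$, $\sigma=(\mu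 p)^{1/4}$, $r(t)=p/(1+e\cos\theta(t))$ with $r^2\dot\theta=\sigma^2$; the barred coordinates are defined from $q_i=a_{ix}z+\sum_kb_{ik}w_{k-2}$, $p_i=m_i(a_{ix}Z+\sum_kb_{ik}W_{k-2})$ by $x=\frac{r}{\sigma}R(\theta)\bar x$, $X=R(\theta)(\frac{\sigma}{r}\bar X+\frac{\dot r}{\sigma}\bar x)$ for $(x,X)\in\{(z,Z),(w_l,W_l)\}$, with $\theta$ as independent variable and Hamiltonian $\bar H=\tfrac12(|\bar Z|^2+\sum|\bar W_k|^2)+(\bar z\cdot J\bar Z+\sum\bar w_k\cdot J\bar W_k)+\frac{p-r(\theta)}{2p}(|\bar z|^2+\sum|\bar w_k|^2)-\frac{r(\theta)}{\sigma}U(\bar z,\bar w)$, $r(\theta)=p/(1+e\cos\theta)$. $J=\begin{pmatrix}0&-1\\1&0\end{pmatrix}$, $R(\theta)$ the rotation matrix by $\theta$. *)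

(* Defs.v *)
From Stdlib Require Import Reals Lra List.
Open Scope R_scope.

Fixpoint sumR (N : nat) (f : nat -> R) : R :=
  match N with O => 0 | S k => sumR k f + f k end.

Definition R2 : Type := (R * R)%type.
Definition add2 (u v : R2) : R2 := (fst u + fst v, snd u + snd v).
Definition scal2 (k : R) (u : R2) : R2 := (k * fst u, k * snd u).
Definition dot2 (u v : R2) : R := fst u * fst v + snd u * snd v.
Definition norm2 (u : R2) : R := sqrt (dot2 u u).
Definition Jmul (u : R2) : R2 := (- snd u, fst u).
Definition rot (t : R) (u : R2) : R2 :=
  (cos t * fst u - sin t * snd u, sin t * fst u + cos t * snd u).
Definition sum2 (N : nat) (f : nat -> R2) : R2 :=
  (sumR N (fun l => fst (f l)), sumR N (fun l => snd (f l))).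

Inductive comp := C1 | C2.
Definition getc (c : comp) (u : R2) : R := match c with C1 => fst u | C2 => snd u end.
Definition addc (c : comp) (h : R) (u : R2) : R2 :=
  match c with C1 => (fst u + h, snd u) | C2 => (fst u, snd u + h) end.
Definition deltac (c d : comp) : R :=
  match c, d with C1, C1 => 1 | C2, C2 => 1 | _, _ => 0 end.
Definition Jent (c d : comp) : R :=
  match c, d with C1, C2 => -1 | C2, C1 => 1 | _, _ => 0 end.
Definition mJent (c d : comp) : R := - Jent c d.

(* ---------- the collinear central configuration data ----------
   indices of bodies are 0..n-1 (paper: 1..n);
   eigen-indices k are 0..n-3 (paper: k+3, i.e. lambda_{k+3}, v_{k+3}). *)
Definition mu_cc (n : nat) (m a : nat -> R) : R :=
  sumR n (fun j => sumR j (fun i => m i * m j / Rabs (a i - a j))).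

Definition is_central (n : nat) (m a : nat -> R) : Prop :=
  forall i, (i < n)%nat ->
    sumR n (fun j => if Nat.eqb j i then 0
                     else m j * (a i - a j) / Rabs (a i - a j) ^ 3)
    = mu_cc n m a * a i.

Definition Bmat (n : nat) (m a : nat -> R) (i j : nat) : R :=
  if Nat.eqb i j then
    - sumR n (fun k => if Nat.eqb k i then 0 else m i * m k / Rabs (a i - a k) ^ 3)
  else m i * m j / Rabs (a i - a j) ^ 3.

Definition Dmat (n : nat) (m a : nat -> R) (i j : nat) : R :=
  (if Nat.eqb i j then mu_cc n m a else 0) + Bmat n m a i j / m i.

Definition r_of (e p th : R) : R := p / (1 + e * cos th).
Definition sigma_of (mu p : R) : R := sqrt (sqrt (mu * p)).

(* ---------- phase space of the barred coordinates ----------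
   (Zbar, Wbar_l, zbar, wbar_l), l = 0..n-3 (paper: l = 1..n-2) *)
Record state := mkState { sZ : R2; sW : nat -> R2; sz : R2; sw : nat -> R2 }.

Inductive coord :=
| cZ (c : comp) | cW (l : nat) (c : comp) | cz (c : comp) | cw (l : nat) (c : comp).

Definition valid (N : nat) (j : coord) : Prop :=
  match j with cW l _ | cw l _ => (l < N)%nat | _ => True end.

Definition getx (s : state) (j : coord) : R :=
  match j with
  | cZ c => getc c (sZ s) | cW l c => getc c (sW s l)
  | cz c => getc c (sz s) | cw l c => getc c (sw s l) end.

Definition shift (s : state) (j : coord) (h : R) : state :=
  match j with
  | cZ c => mkState (addc c h (sZ s)) (sW s) (sz s) (sw s)
  | cW l c => mkState (sZ s) (fun l' => if Nat.eqb l' l then addc c h (sW s l') else sW s l')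
                      (sz s) (sw s)
  | cz c => mkState (sZ s) (sW s) (addc c h (sz s)) (sw s)
  | cw l c => mkState (sZ s) (sW s) (sz s)
                      (fun l' => if Nat.eqb l' l then addc c h (sw s l') else sw s l')
  end.

Definition Upot (n : nat) (m a : nat -> R) (b : nat -> nat -> R) (z : R2) (w : nat -> R2) : R :=
  sumR n (fun j => sumR j (fun i =>
    m i * m j / norm2 (add2 (scal2 (a i - a j) z)
                            (sum2 (n - 2) (fun l => scal2 (b i l - b j l) (w l)))))).

Definition Hbar (n : nat) (m a : nat -> R) (b : nat -> nat -> R) (e p : R)
    (th : R) (s : state) : R :=
  let N := (n - 2)%nat in
  let mu := mu_cc n m a in
  let sg := sigma_of mu p in
  let r := r_of e p th in
  1/2 * (dot2 (sZ s) (sZ s) + sumR N (fun l => dot2 (sW s l) (sW s l)))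
  + (dot2 (sz s) (Jmul (sZ s)) + sumR N (fun l => dot2 (sw s l) (Jmul (sW s l))))
  + (p - r) / (2 * p) * (dot2 (sz s) (sz s) + sumR N (fun l => dot2 (sw s l) (sw s l)))
  - r / sg * Upot n m a b (sz s) (sw s).

Definition partial_is (F : state -> R) (x : state) (j : coord) (d : R) : Prop :=
  derivable_pt_lim (fun h => F (shift x j h)) 0 d.

Definition second_partial_is (F : state -> R) (x : state) (k j : coord) (v : R) : Prop :=
  exists delta, 0 < delta /\ exists g : R -> R,
    (forall h, Rabs h < delta -> partial_is F (shift x k h) j (g h)) /\
    derivable_pt_lim g 0 v.

(* conjugate variable and sign in Hamilton's equations:
   d zbar/dtheta = dH/dZbar, d Zbar/dtheta = - dH/dzbar (same for w, W) *)
Definition conjc (j : coord) : coord :=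
  match j with cZ c => cz c | cW l c => cw l c | cz c => cZ c | cw l c => cW l c end.
Definition hsign (j : coord) : R :=
  match j with cZ _ | cW _ _ => -1 | _ => 1 end.

Definition is_ham_solution (H : R -> state -> R) (N : nat) (xi : R -> state) : Prop :=
  forall th j, valid N j ->
    exists d, partial_is (H th) (xi th) (conjc j) d /\
              derivable_pt_lim (fun s => getx (xi s) j) th (hsign j * d).

Definition xi0 (sg : R) : state :=
  mkState (0, sg) (fun _ => (0, 0)) (sg, 0) (fun _ => (0, 0)).

Definition unbar_pos (sg r th : R) (xb : R2) : R2 := scal2 (r / sg) (rot th xb).
Definition unbar_mom (sg r rd th : R) (xb Xb : R2) : R2 :=
  rot th (add2 (scal2 (sg / r) Xb) (scal2 (rd / sg) xb)).

Definition q_of (n : nat) (a : nat -> R) (b : nat -> nat -> R) (sg r th : R) (s : state)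
    (i : nat) : R2 :=
  add2 (scal2 (a i) (unbar_pos sg r th (sz s)))
       (sum2 (n - 2) (fun l => scal2 (b i l) (unbar_pos sg r th (sw s l)))).

Definition p_of (n : nat) (m a : nat -> R) (b : nat -> nat -> R) (sg r rd th : R) (s : state)
    (i : nat) : R2 :=
  scal2 (m i)
   (add2 (scal2 (a i) (unbar_mom sg r rd th (sz s) (sZ s)))
         (sum2 (n - 2) (fun l => scal2 (b i l) (unbar_mom sg r rd th (sw s l) (sW s l))))).

Definition Hzz (e th : R) (c d : comp) : R :=
  match c, d with
  | C1, C1 => - (2 - e * cos th) / (1 + e * cos th)
  | C2, C2 => 1
  | _, _ => 0 end.

Definition Hww (e th beta : R) (c d : comp) : R :=
  match c, d with
  | C1, C1 => - (2 * beta + 2 - e * cos th) / (1 + e * cos th)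
  | C2, C2 => (beta + 1 + e * cos th) / (1 + e * cos th)
  | _, _ => 0 end.

Definition ifeq (l l' : nat) (x : R) : R := if Nat.eqb l l' then x else 0.

Definition hessB (e th : R) (beta : nat -> R) (j k : coord) : R :=
  match j, k with
  | cZ c, cZ d => deltac c d
  | cW l c, cW l' d => ifeq l l' (deltac c d)
  | cZ c, cz d => mJent c d
  | cW l c, cw l' d => ifeq l l' (mJent c d)
  | cz c, cZ d => Jent c d
  | cw l c, cW l' d => ifeq l l' (Jent c d)
  | cz c, cz d => Hzz e th c d
  | cw l c, cw l' d => ifeq l l' (Hww e th (beta l) c d)
  | _, _ => 0
  end.

Definition coords (N : nat) : list coord :=
  cZ C1 :: cZ C2 :: cz C1 :: cz C2 ::
  flat_map (fun l => cW l C1 :: cW l C2 :: cw l C1 :: cw l C2 :: nil) (seq 0 N).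

Definition sumL (L : list coord) (f : coord -> R) : R :=
  fold_right (fun j acc => f j + acc) 0 L.

Definition quad_form (N : nat) (B : coord -> coord -> R) (s : state) : R :=
  sumL (coords N) (fun j => sumL (coords N) (fun k => getx s j * B j k * getx s k)).

Definition qf2 (M : comp -> comp -> R) (u : R2) : R :=
  getc C1 u * M C1 C1 * getc C1 u + getc C1 u * M C1 C2 * getc C2 u
  + getc C2 u * M C2 C1 * getc C1 u + getc C2 u * M C2 C2 * getc C2 u.

Definition H2 (N : nat) (e th : R) (beta : nat -> R) (s : state) : R :=
  1/2 * dot2 (sZ s) (sZ s) + dot2 (sz s) (Jmul (sZ s)) + 1/2 * qf2 (Hzz e th) (sz s)
  + sumR N (fun l => 1/2 * dot2 (sW s l) (sW s l) + dot2 (sw s l) (Jmul (sW s l))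
                     + 1/2 * qf2 (Hww e th (beta l)) (sw s l)).

(* Main.v *)
Require Import Defs.
From Stdlib Require Import Reals Lra List Lia FunctionalExtensionality.
Open Scope R_scope.

Module Helpers.
From Coquelicot Require Import Coquelicot.

Lemma sumR_ext N f g : (forall l, (l < N)%nat -> f l = g l) -> sumR N f = sumR N g.
Proof. induction N; simpl; intros H; [reflexivity|]. rewrite IHN by (intros; apply H; lia). rewrite H by lia. reflexivity. Qed.

Lemma sumR_zero N f : (forall l, (l < N)%nat -> f l = 0) -> sumR N f = 0.
Proof. induction N; simpl; intros H; [reflexivity|]. rewrite IHN by (intros; apply H; lia). rewrite H by lia. ring. Qed.

Lemma sumR_one N f l0 : (l0 < N)%nat -> (forall l, (l < N)%nat -> l <> l0 -> f l = 0) -> sumR N f = f l0.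
Proof.
  induction N; simpl; intros H1 H; [lia|].
  destruct (Nat.eq_dec l0 N) as [->|Hn].
  - rewrite sumR_zero; [ring|]. intros; apply H; lia.
  - rewrite IHN by (try lia; intros; apply H; lia). rewrite (H N) by lia. ring.
Qed.

Lemma sumR_plus N f g : sumR N (fun l => f l + g l) = sumR N f + sumR N g.
Proof. induction N; simpl; [ring|]. rewrite IHN; ring. Qed.

Lemma sumR_scal N c f : sumR N (fun l => c * f l) = c * sumR N f.
Proof. induction N; simpl; [ring|]. rewrite IHN; ring. Qed.

Lemma sumR_nonneg N f : (forall l, (l < N)%nat -> 0 <= f l) -> 0 <= sumR N f.
Proof. induction N; simpl; intros H; [lra|]. assert (0 <= f N) by (apply H; lia).
  assert (0 <= sumR N f) by (apply IHN; intros; apply H; lia). lra. Qed.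

Lemma sumR_ge N f l0 : (l0 < N)%nat -> (forall l, (l < N)%nat -> 0 <= f l) -> f l0 <= sumR N f.
Proof. induction N; simpl; intros H1 H; [lia|].
  destruct (Nat.eq_dec l0 N) as [->|Hn].
  - assert (0 <= sumR N f) by (apply sumR_nonneg; intros; apply H; lia). lra.
  - assert (f l0 <= sumR N f) by (apply IHN; [lia| intros; apply H; lia]).
    assert (0 <= f N) by (apply H; lia). lra.
Qed.

Lemma dpl_eq f x l l' : derivable_pt_lim f x l' -> l' = l -> derivable_pt_lim f x l.
Proof. intros H ->; exact H. Qed.
Lemma dpl_ext f g x l : derivable_pt_lim f x l -> (forall h, f h = g h) -> derivable_pt_lim g x l.
Proof. intros H E. replace g with f by (apply functional_extensionality; exact E). exact H. Qed.
Lemma dpl_plus f g x a b : derivable_pt_lim f x a -> derivable_pt_lim g x b ->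
  derivable_pt_lim (fun h => f h + g h) x (a + b).
Proof. intros; exact (derivable_pt_lim_plus f g x a b H H0). Qed.
Lemma dpl_minus f g x a b : derivable_pt_lim f x a -> derivable_pt_lim g x b ->
  derivable_pt_lim (fun h => f h - g h) x (a - b).
Proof. intros; exact (derivable_pt_lim_minus f g x a b H H0). Qed.
Lemma dpl_scal c f x a : derivable_pt_lim f x a -> derivable_pt_lim (fun h => c * f h) x (c * a).
Proof. intros; exact (derivable_pt_lim_scal f c x a H). Qed.
Lemma dpl_const c x : derivable_pt_lim (fun _ => c) x 0.
Proof. exact (derivable_pt_lim_const c x). Qed.
Lemma dpl_sum N (F : nat -> R -> R) d x : (forall l, (l < N)%nat -> derivable_pt_lim (F l) x (d l)) ->
  derivable_pt_lim (fun h => sumR N (fun l => F l h)) x (sumR N d).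
Proof.
  induction N; simpl; intros H.
  - apply dpl_const.
  - apply dpl_plus; [apply IHN; intros; apply H; lia| apply H; lia].
Qed.

Lemma dq_quad u a v b : derivable_pt_lim (fun h => dot2 (add2 u (scal2 h a)) (add2 v (scal2 h b))) 0
   (dot2 u b + dot2 a v).
Proof. destruct u, a, v, b; unfold dot2, add2, scal2; simpl. apply is_derive_Reals. auto_derive; auto; ring. Qed.
Lemma dqJ u a v b : derivable_pt_lim (fun h => dot2 (add2 u (scal2 h a)) (Jmul (add2 v (scal2 h b)))) 0
   (dot2 u (Jmul b) + dot2 a (Jmul v)).
Proof. destruct u, a, v, b; unfold dot2, add2, scal2, Jmul; simpl. apply is_derive_Reals. auto_derive; auto; ring. Qed.
Lemma dl1 u a v : derivable_pt_lim (fun h => dot2 (add2 u (scal2 h a)) v) 0 (dot2 a v).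
Proof. destruct u, a, v; unfold dot2, add2, scal2; simpl. apply is_derive_Reals. auto_derive; auto; ring. Qed.
Lemma dl2 u a v : derivable_pt_lim (fun h => dot2 v (add2 u (scal2 h a))) 0 (dot2 v a).
Proof. destruct u, a, v; unfold dot2, add2, scal2; simpl. apply is_derive_Reals. auto_derive; auto; ring. Qed.
Lemma dlJ1 u a v : derivable_pt_lim (fun h => dot2 (add2 u (scal2 h a)) (Jmul v)) 0 (dot2 a (Jmul v)).
Proof. destruct u, a, v; unfold dot2, add2, scal2, Jmul; simpl. apply is_derive_Reals. auto_derive; auto; ring. Qed.
Lemma dlJ2 u a v : derivable_pt_lim (fun h => dot2 v (Jmul (add2 u (scal2 h a)))) 0 (dot2 v (Jmul a)).
Proof. destruct u, a, v; unfold dot2, add2, scal2, Jmul; simpl. apply is_derive_Reals. auto_derive; auto; ring. Qed.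

Ltac dt := repeat first [ apply dq_quad | apply dqJ | apply dl1 | apply dl2 | apply dlJ1 | apply dlJ2
  | apply dpl_plus | apply dpl_minus | apply dpl_scal | (apply dpl_sum; intros) | apply dpl_const ].

Lemma L1 (c : R) (D V : R2) : 0 < dot2 D D ->
  derivable_pt_lim (fun h => c / norm2 (add2 D (scal2 h V))) 0
    (c * (- dot2 D V / norm2 D ^ 3)).
Proof.
  destruct D as [x y], V as [u v]; unfold norm2, dot2, add2, scal2; simpl; intro Hq.
  apply is_derive_Reals.
  assert (HS: 0 < sqrt (x*x+y*y)) by (apply sqrt_lt_R0; lra).
  auto_derive.
  all: rewrite ?Rmult_0_l, ?Rplus_0_r.
  all: try (split; lra).
  all: try (field; lra).
  all: try lra.
Qed.

Lemma L2 (D V1 V2 : R2) : 0 < dot2 D D ->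
  derivable_pt_lim (fun h => dot2 (add2 D (scal2 h V2)) V1 / norm2 (add2 D (scal2 h V2)) ^ 3) 0
    (dot2 V2 V1 / norm2 D ^ 3 - 3 * dot2 D V1 * dot2 D V2 / norm2 D ^ 5).
Proof.
  destruct D as [x y], V1 as [u1 v1], V2 as [u v]; unfold norm2, dot2, add2, scal2; simpl; intro Hq.
  apply is_derive_Reals.
  assert (HS: 0 < sqrt (x*x+y*y)) by (apply sqrt_lt_R0; lra).
  auto_derive.
  all: rewrite ?Rmult_0_l, ?Rplus_0_r.
  all: try (split; lra).
  all: try (field; lra).
  all: try lra.
  all: repeat split; try lra; repeat apply Rmult_integral_contrapositive_currified; lra.
Qed.

Definition line (s d : state) (h : R) : state :=
  mkState (add2 (sZ s) (scal2 h (sZ d))) (fun l => add2 (sW s l) (scal2 h (sW d l)))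
          (add2 (sz s) (scal2 h (sz d))) (fun l => add2 (sw s l) (scal2 h (sw d l))).
Definition z2 : R2 := (0, 0).
Definition ec (c : Defs.comp) : R2 := match c with Defs.C1 => (1, 0) | Defs.C2 => (0, 1) end.
Definition dir (j : coord) : state :=
  match j with
  | cZ c => mkState (ec c) (fun _ => z2) z2 (fun _ => z2)
  | cW l c => mkState z2 (fun l' => if Nat.eqb l' l then ec c else z2) z2 (fun _ => z2)
  | cz c => mkState z2 (fun _ => z2) (ec c) (fun _ => z2)
  | cw l c => mkState z2 (fun _ => z2) z2 (fun l' => if Nat.eqb l' l then ec c else z2)
  end.

Lemma pair_eq (u : R2) x y : fst u = x -> snd u = y -> u = (x, y).
Proof. destruct u; simpl; intros -> ->; reflexivity. Qed.
Ltac r2eq := repeat match goal with |- context [fst ?u] => match u with (_,_) => fail 1 | _ => destruct u end end; simpl; f_equal; ring.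
Lemma shift_line s j h : shift s j h = line s (dir j) h.
Proof.
  destruct s as [Z W z w]; destruct j as [c|l c|c|l c]; destruct c; unfold shift, line, dir, addc, add2, scal2, z2, ec; simpl;
  f_equal; try (apply functional_extensionality; intro l'; destruct (Nat.eqb l' l)); simpl.
  all: try (apply functional_extensionality; intro).
  all: first [ apply pair_eq; simpl; ring | f_equal; ring ].
Qed.

Definition Dv (n : nat) (a : nat -> R) (b : nat -> nat -> R) (s : state) (i j : nat) : R2 :=
  add2 (scal2 (a i - a j) (sz s)) (sum2 (n - 2) (fun l => scal2 (b i l - b j l) (sw s l))).

Lemma Dv_line n a b s d h i j : Dv n a b (line s d h) i j = add2 (Dv n a b s i j) (scal2 h (Dv n a b d i j)).
Proof.
  unfold Dv, sum2, add2, scal2, line; simpl. f_equal;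
  match goal with |- _ + sumR ?N ?F = (_ + sumR _ ?G) + ?h * (_ + sumR _ ?K) =>
    assert (E: sumR N F = sumR N G + h * sumR N K);
    [ rewrite <- sumR_scal, <- sumR_plus; apply sumR_ext; intros; ring | rewrite E; ring ] end.
Qed.

Lemma Upot_Dv n m a b s : Upot n m a b (sz s) (sw s) =
  sumR n (fun j => sumR j (fun i => m i * m j / norm2 (Dv n a b s i j))).
Proof. reflexivity. Qed.

Definition Qf (N : nat) (K : R) (s : state) : R :=
  1/2 * (dot2 (sZ s) (sZ s) + sumR N (fun l => dot2 (sW s l) (sW s l)))
  + (dot2 (sz s) (Jmul (sZ s)) + sumR N (fun l => dot2 (sw s l) (Jmul (sW s l))))
  + K * (dot2 (sz s) (sz s) + sumR N (fun l => dot2 (sw s l) (sw s l))).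

Lemma Hbar_eq n m a b e p th s : Hbar n m a b e p th s =
  Qf (n - 2) ((p - r_of e p th) / (2 * p)) s
  - r_of e p th / sigma_of (mu_cc n m a) p * Upot n m a b (sz s) (sw s).
Proof. reflexivity. Qed.

Definition DQ (N : nat) (K : R) (s d : state) : R :=
  1/2 * ((dot2 (sZ s) (sZ d) + dot2 (sZ d) (sZ s)) + sumR N (fun l => dot2 (sW s l) (sW d l) + dot2 (sW d l) (sW s l)))
  + ((dot2 (sz s) (Jmul (sZ d)) + dot2 (sz d) (Jmul (sZ s))) + sumR N (fun l => dot2 (sw s l) (Jmul (sW d l)) + dot2 (sw d l) (Jmul (sW s l))))
  + K * ((dot2 (sz s) (sz d) + dot2 (sz d) (sz s)) + sumR N (fun l => dot2 (sw s l) (sw d l) + dot2 (sw d l) (sw s l))).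

Definition D2Q (N : nat) (K : R) (d1 d2 : state) : R :=
  1/2 * ((dot2 (sZ d2) (sZ d1) + dot2 (sZ d1) (sZ d2)) + sumR N (fun l => dot2 (sW d2 l) (sW d1 l) + dot2 (sW d1 l) (sW d2 l)))
  + ((dot2 (sz d2) (Jmul (sZ d1)) + dot2 (sz d1) (Jmul (sZ d2))) + sumR N (fun l => dot2 (sw d2 l) (Jmul (sW d1 l)) + dot2 (sw d1 l) (Jmul (sW d2 l))))
  + K * ((dot2 (sz d2) (sz d1) + dot2 (sz d1) (sz d2)) + sumR N (fun l => dot2 (sw d2 l) (sw d1 l) + dot2 (sw d1 l) (sw d2 l))).

Lemma DQ_ok N K s d : derivable_pt_lim (fun h => Qf N K (line s d h)) 0 (DQ N K s d).
Proof. unfold Qf, line, DQ; cbn [sZ sW sz sw]. dt. Qed.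

Lemma D2Q_ok N K s d1 d2 : derivable_pt_lim (fun h => DQ N K (line s d2 h) d1) 0 (D2Q N K d1 d2).
Proof. unfold DQ, line, D2Q; cbn [sZ sW sz sw]. dt. Qed.

Definition DU n m a b (s d : state) : R :=
  sumR n (fun j => sumR j (fun i => (m i * m j) *
     (- dot2 (Dv n a b s i j) (Dv n a b d i j) / norm2 (Dv n a b s i j) ^ 3))).
Definition D2U n m a b (s d1 d2 : state) : R :=
  sumR n (fun j => sumR j (fun i => (m i * m j) *
     - (dot2 (Dv n a b d2 i j) (Dv n a b d1 i j) / norm2 (Dv n a b s i j) ^ 3
        - 3 * dot2 (Dv n a b s i j) (Dv n a b d1 i j) * dot2 (Dv n a b s i j) (Dv n a b d2 i j)
            / norm2 (Dv n a b s i j) ^ 5))).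
Definition ND n a b (s : state) : Prop :=
  forall i j, (i < j)%nat -> (j < n)%nat -> 0 < dot2 (Dv n a b s i j) (Dv n a b s i j).

Lemma dpl_opp f x l : derivable_pt_lim f x l -> derivable_pt_lim (fun h => - f h) x (- l).
Proof. intros H. exact (derivable_pt_lim_opp f x l H). Qed.

Lemma DU_ok n m a b s d : ND n a b s ->
  derivable_pt_lim (fun h => Upot n m a b (sz (line s d h)) (sw (line s d h))) 0 (DU n m a b s d).
Proof.
  intros HN.
  apply dpl_ext with (f := fun h => sumR n (fun j => sumR j (fun i =>
      m i * m j / norm2 (add2 (Dv n a b s i j) (scal2 h (Dv n a b d i j)))))).
  - apply dpl_sum; intros j Hj; apply dpl_sum; intros i Hi. apply L1. apply HN; auto.
  - intros h; rewrite Upot_Dv; apply sumR_ext; intros; apply sumR_ext; intros; rewrite Dv_line; reflexivity.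
Qed.

Lemma D2U_ok n m a b s d1 d2 : ND n a b s ->
  derivable_pt_lim (fun h => DU n m a b (line s d2 h) d1) 0 (D2U n m a b s d1 d2).
Proof.
  intros HN.
  apply dpl_ext with (f := fun h => sumR n (fun j => sumR j (fun i => (m i * m j) *
      (- dot2 (add2 (Dv n a b s i j) (scal2 h (Dv n a b d2 i j))) (Dv n a b d1 i j)
        / norm2 (add2 (Dv n a b s i j) (scal2 h (Dv n a b d2 i j))) ^ 3)))).
  - apply dpl_sum; intros j Hj; apply dpl_sum; intros i Hi. apply dpl_scal.
    eapply dpl_ext; [apply dpl_opp; apply L2; apply HN; auto| intros; simpl; unfold Rdiv; ring].
  - intros h; unfold DU; apply sumR_ext; intros; apply sumR_ext; intros; rewrite Dv_line; reflexivity.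
Qed.

Definition DH n m a b e p th (s d : state) : R :=
  DQ (n - 2) ((p - r_of e p th) / (2 * p)) s d
  - r_of e p th / sigma_of (mu_cc n m a) p * DU n m a b s d.
Definition D2H n m a b e p th (s d1 d2 : state) : R :=
  D2Q (n - 2) ((p - r_of e p th) / (2 * p)) d1 d2
  - r_of e p th / sigma_of (mu_cc n m a) p * D2U n m a b s d1 d2.

Lemma DH_ok n m a b e p th s d : ND n a b s ->
  derivable_pt_lim (fun h => Hbar n m a b e p th (line s d h)) 0 (DH n m a b e p th s d).
Proof.
  intros HN. eapply dpl_ext; [| intros h; rewrite Hbar_eq; reflexivity].
  apply dpl_minus; [apply DQ_ok| apply dpl_scal; apply DU_ok; auto].
Qed.

Lemma D2H_ok n m a b e p th s d1 d2 : ND n a b s ->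
  derivable_pt_lim (fun h => DH n m a b e p th (line s d2 h) d1) 0 (D2H n m a b e p th s d1 d2).
Proof.
  intros HN. unfold DH, D2H.
  apply dpl_minus; [apply D2Q_ok| apply dpl_scal; apply D2U_ok; auto].
Qed.

Definition cf (a : nat -> R) (b : nat -> nat -> R) (jj : coord) (i j : nat) : R :=
  match jj with cz _ => a i - a j | cw l _ => b i l - b j l | _ => 0 end.
Definition ecj (jj : coord) : R2 :=
  match jj with cZ c | cW _ c | cz c | cw _ c => ec c end.

Lemma Dv_dir n a b jj i j : valid (n - 2) jj -> Dv n a b (dir jj) i j = scal2 (cf a b jj i j) (ecj jj).
Proof.
  intros Hv; destruct jj as [c|l c|c|l c]; unfold Dv, dir, sum2, add2, scal2, cf, ecj; cbn [sz sw fst snd];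
  apply pair_eq; simpl;
  first [ rewrite sumR_zero by (intros; destruct c; simpl; ring); destruct c; simpl; ring
        | rewrite (sumR_one _ _ l) by (auto; intros l0 _ Hne; rewrite (proj2 (Nat.eqb_neq l0 l) Hne); simpl; ring);
          rewrite Nat.eqb_refl; destruct c; simpl; ring ].
Qed.

Lemma Dv_xi0 n a b sg i j : Dv n a b (xi0 sg) i j = ((a i - a j) * sg, 0).
Proof.
  unfold Dv, xi0, sum2, add2, scal2; cbn [sz sw fst snd]. apply pair_eq; simpl;
  rewrite sumR_zero by (intros; ring); ring.
Qed.

Lemma norm_xi0 x sg : 0 < sg -> norm2 (x * sg, 0) = Rabs x * sg.
Proof.
  intros H. unfold norm2, dot2; simpl. replace (x * sg * (x * sg) + 0 * 0) with (Rsqr (x * sg)) by (unfold Rsqr; ring).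
  rewrite sqrt_Rsqr_abs, Rabs_mult, (Rabs_pos_eq sg) by lra. reflexivity.
Qed.

Definition Pp n m a (f g : nat -> nat -> R) : R :=
  sumR n (fun j => sumR j (fun i => m i * m j / Rabs (a i - a j) ^ 3 * f i j * g i j)).

Definition incr n (a : nat -> R) := forall i j, (i < j)%nat -> (j < n)%nat -> a i < a j.

Lemma DU_xi0 n m a b sg jj : 0 < sg -> incr n a -> valid (n - 2) jj ->
  DU n m a b (xi0 sg) (dir jj) = - Pp n m a (fun i j => a i - a j) (cf a b jj) * fst (ecj jj) / sg ^ 2.
Proof.
  intros Hs Ha Hv. unfold DU, Pp.
  rewrite (sumR_ext n _ (fun j => (- fst (ecj jj) / sg^2) * sumR j (fun i => m i * m j / Rabs (a i - a j) ^ 3 * (a i - a j) * cf a b jj i j))).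
  { rewrite sumR_scal. unfold Rdiv; ring. }
  intros j Hj. rewrite <- sumR_scal. apply sumR_ext; intros i Hi.
  rewrite Dv_xi0, Dv_dir, norm_xi0 by auto.
  assert (Hal: a i - a j <> 0) by (specialize (Ha i j Hi Hj); lra).
  assert (HA: Rabs (a i - a j) <> 0) by (apply Rabs_no_R0; auto).
  destruct (ecj jj) as [u v]. unfold dot2, scal2; simpl.
  field. lra.
Qed.

Definition kap (u v : R2) : R := dot2 v u - 3 * fst u * fst v.

Lemma D2U_xi0 n m a b sg j1 j2 : 0 < sg -> incr n a -> valid (n - 2) j1 -> valid (n - 2) j2 ->
  D2U n m a b (xi0 sg) (dir j1) (dir j2) = - Pp n m a (cf a b j1) (cf a b j2) * kap (ecj j1) (ecj j2) / sg ^ 3.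
Proof.
  intros Hs Ha Hv1 Hv2. unfold D2U, Pp.
  rewrite (sumR_ext n _ (fun j => (- kap (ecj j1) (ecj j2) / sg^3) * sumR j (fun i => m i * m j / Rabs (a i - a j) ^ 3 * cf a b j1 i j * cf a b j2 i j))).
  { rewrite sumR_scal. unfold Rdiv; ring. }
  intros j Hj. rewrite <- sumR_scal. apply sumR_ext; intros i Hi.
  rewrite Dv_xi0, !Dv_dir, norm_xi0 by auto.
  assert (Hal: a i - a j < 0) by (specialize (Ha i j Hi Hj); lra).
  rewrite Rabs_left by auto.
  unfold kap. destruct (ecj j1) as [u1 v1], (ecj j2) as [u2 v2]. unfold dot2, scal2; simpl.
  field. lra.
Qed.

Lemma pair_id n (c : nat -> nat -> R) x y : (forall i j, c i j = c j i) ->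
  sumR n (fun j => sumR j (fun i => c i j * (x i - x j) * (y i - y j))) =
  sumR n (fun i => x i * sumR n (fun j => if Nat.eqb j i then 0 else c i j * (y i - y j))).
Proof.
  intros Hc. induction n; simpl; [ring|]. rewrite IHn.
  rewrite (sumR_ext n (fun i => x i * (sumR n (fun j => if Nat.eqb j i then 0 else c i j * (y i - y j))
       + (if Nat.eqb n i then 0 else c i n * (y i - y n))))
    (fun i => x i * sumR n (fun j => if Nat.eqb j i then 0 else c i j * (y i - y j)) + x i * (c i n * (y i - y n)))).
  2: { intros i Hi. rewrite (proj2 (Nat.eqb_neq n i)) by lia. ring. }
  rewrite sumR_plus. rewrite Nat.eqb_refl.
  rewrite (sumR_ext n (fun j => if Nat.eqb j n then 0 else c n j * (y n - y j)) (fun j => c n j * (y n - y j))).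
  2: { intros j Hj. rewrite (proj2 (Nat.eqb_neq j n)) by lia. reflexivity. }
  assert (E: sumR n (fun i => c i n * (x i - x n) * (y i - y n)) =
     sumR n (fun i => x i * (c i n * (y i - y n))) + x n * sumR n (fun j => c n j * (y n - y j))).
  { rewrite <- sumR_scal, <- sumR_plus. apply sumR_ext; intros. rewrite (Hc n l). ring. }
  rewrite E. ring.
Qed.

Lemma sumR_mult_r N f c : sumR N (fun l => f l * c) = sumR N f * c.
Proof. induction N; simpl; [ring|]. rewrite IHN; ring. Qed.

Definition cc (m a : nat -> R) (i j : nat) : R := m i * m j / Rabs (a i - a j) ^ 3.
Lemma cc_sym (m a : nat -> R) i j : cc m a i j = cc m a j i.
Proof. unfold cc. rewrite (Rabs_minus_sym (a i) (a j)). unfold Rdiv. rewrite (Rmult_comm (m i)). reflexivity. Qed.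

Lemma Bsum n m a x i : (i < n)%nat ->
  sumR n (fun j => Bmat n m a i j * x j) =
  - sumR n (fun j => if Nat.eqb j i then 0 else cc m a i j * (x i - x j)).
Proof.
  intros Hi.
  set (T := sumR n (fun k => if Nat.eqb k i then 0 else m i * m k / Rabs (a i - a k) ^ 3)).
  rewrite (sumR_ext n _ (fun j => (if Nat.eqb j i then - T * x i else 0) + (if Nat.eqb j i then 0 else cc m a i j * x j))).
  2: { intros j Hj. unfold Bmat. rewrite (Nat.eqb_sym i j). destruct (Nat.eqb_spec j i); [subst; fold T; ring| unfold cc; ring]. }
  rewrite sumR_plus, (sumR_one n _ i Hi) by (intros l _ Hne; rewrite (proj2 (Nat.eqb_neq l i) Hne); reflexivity).
  rewrite Nat.eqb_refl.
  rewrite (sumR_ext n (fun j => if Nat.eqb j i then 0 else cc m a i j * (x i - x j))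
     (fun j => (if Nat.eqb j i then 0 else cc m a i j) * x i + (-1) * (if Nat.eqb j i then 0 else cc m a i j * x j))).
  2: { intros j Hj. destruct (Nat.eqb j i); ring. }
  rewrite sumR_plus, sumR_mult_r, sumR_scal. unfold T, cc. ring.
Qed.

Lemma Pp_sym n m a f g : Pp n m a f g = Pp n m a g f.
Proof. unfold Pp. apply sumR_ext; intros; apply sumR_ext; intros; ring. Qed.

Lemma S1 n m a : incr n a -> Pp n m a (fun i j => a i - a j) (fun i j => a i - a j) = mu_cc n m a.
Proof.
  intros Ha. unfold Pp, mu_cc. apply sumR_ext; intros j Hj; apply sumR_ext; intros i Hi.
  assert (Hal: a i - a j < 0) by (specialize (Ha i j Hi Hj); lra).
  rewrite Rabs_left by auto. field. lra.
Qed.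

Lemma S2 n m a (b : nat -> nat -> R) l : is_central n m a -> sumR n (fun i => m i * a i * b i l) = 0 ->
  Pp n m a (fun i j => a i - a j) (fun i j => b i l - b j l) = 0.
Proof.
  intros Hc Hb. rewrite Pp_sym. unfold Pp.
  rewrite (sumR_ext n _ (fun j => sumR j (fun i => cc m a i j * (b i l - b j l) * (a i - a j)))) by (intros; apply sumR_ext; intros; unfold cc; ring).
  rewrite (pair_id n (cc m a) (fun i => b i l) a (cc_sym m a)).
  rewrite (sumR_ext n _ (fun i => mu_cc n m a * (m i * a i * b i l))). { rewrite sumR_scal, Hb; ring. }
  intros i Hi.
  rewrite (sumR_ext n _ (fun j => m i * (if Nat.eqb j i then 0 else m j * (a i - a j) / Rabs (a i - a j) ^ 3))).
  2: { intros j Hj; destruct (Nat.eqb j i); unfold cc; [ring| unfold Rdiv; ring]. }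
  rewrite sumR_scal, (Hc i Hi). ring.
Qed.

Lemma S3 n m a (b : nat -> nat -> R) (lam : nat -> R) l l' :
  (forall i, (i < n)%nat -> 0 < m i) ->
  (forall i, (i < n)%nat -> sumR n (fun j => Dmat n m a i j * b j l') = lam l' * b i l') ->
  sumR n (fun i => m i * b i l * b i l') = (if Nat.eqb l l' then 1 else 0) ->
  Pp n m a (fun i j => b i l - b j l) (fun i j => b i l' - b j l') =
  (mu_cc n m a - lam l') * (if Nat.eqb l l' then 1 else 0).
Proof.
  intros Hm He Ho. unfold Pp.
  rewrite (sumR_ext n _ (fun j => sumR j (fun i => cc m a i j * (b i l - b j l) * (b i l' - b j l')))) by (intros; apply sumR_ext; intros; unfold cc; ring).
  rewrite (pair_id n (cc m a) (fun i => b i l) (fun i => b i l') (cc_sym m a)).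
  rewrite <- Ho, <- sumR_scal. apply sumR_ext; intros i Hi.
  assert (Hmi := Hm i Hi).
  assert (E: sumR n (fun j => Bmat n m a i j * b j l') = m i * (lam l' - mu_cc n m a) * b i l').
  { specialize (He i Hi). unfold Dmat in He.
    rewrite (sumR_ext n _ (fun j => (if Nat.eqb j i then mu_cc n m a * b i l' else 0) + / m i * (Bmat n m a i j * b j l'))) in He.
    2: { intros j Hj. rewrite (Nat.eqb_sym i j). destruct (Nat.eqb_spec j i); [subst; field| field]; lra. }
    rewrite sumR_plus, sumR_scal, (sumR_one n _ i Hi) in He by (intros j _ Hne; rewrite (proj2 (Nat.eqb_neq j i) Hne); reflexivity).
    rewrite Nat.eqb_refl in He.
    apply (Rmult_eq_reg_l (/ m i)); [| apply Rinv_neq_0_compat; lra].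
    replace (/ m i * (m i * (lam l' - mu_cc n m a) * b i l')) with (lam l' * b i l' - mu_cc n m a * b i l') by (field; lra).
    lra. }
  rewrite Bsum in E by auto.
  replace (sumR n (fun j => if Nat.eqb j i then 0 else cc m a i j * (b i l' - b j l'))) with (m i * (mu_cc n m a - lam l') * b i l') by lra.
  ring.
Qed.

Lemma fin_delta N (P : nat -> R -> Prop) :
  (forall i, (i < N)%nat -> exists d, 0 < d /\ forall h, Rabs h < d -> P i h) ->
  exists d, 0 < d /\ forall h, Rabs h < d -> forall i, (i < N)%nat -> P i h.
Proof.
  induction N; intros H.
  - exists 1; split; [lra| intros; lia].
  - destruct IHN as [d1 [Hd1 H1]]; [intros; apply H; lia|].
    destruct (H N) as [d2 [Hd2 H2]]; [lia|].
    exists (Rmin d1 d2); split; [apply Rmin_pos; auto|].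
    intros h Hh i Hi.
    assert (Rabs h < d1) by (eapply Rlt_le_trans; [exact Hh| apply Rmin_l]).
    assert (Rabs h < d2) by (eapply Rlt_le_trans; [exact Hh| apply Rmin_r]).
    destruct (Nat.eq_dec i N) as [->|]; [apply H2; auto| apply H1; auto; lia].
Qed.

Lemma pair_delta x (V : R2) : x <> 0 ->
  exists d, 0 < d /\ forall h, Rabs h < d -> 0 < dot2 (add2 (x, 0) (scal2 h V)) (add2 (x, 0) (scal2 h V)).
Proof.
  intros Hx. destruct V as [u v].
  assert (Hax: 0 < Rabs x) by (apply Rabs_pos_lt; auto).
  assert (Hu: 0 <= Rabs u) by apply Rabs_pos.
  exists (Rabs x / (1 + Rabs u)). split; [apply Rdiv_lt_0_compat; lra|].
  intros h Hh. unfold dot2, add2, scal2; simpl.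
  assert (Hhu: Rabs (h * u) < Rabs x).
  { rewrite Rabs_mult. apply Rmult_lt_compat_r with (r := 1 + Rabs u) in Hh; [|lra].
    unfold Rdiv in Hh. rewrite Rmult_assoc, Rinv_l, Rmult_1_r in Hh by lra.
    assert (0 <= Rabs h) by apply Rabs_pos. nra. }
  assert (Hne: x + h * u <> 0).
  { intro E. assert (h * u = - x) by lra. rewrite H, Rabs_Ropp in Hhu. lra. }
  assert (0 < (x + h * u) * (x + h * u)) by (apply Rsqr_pos_lt in Hne; exact Hne).
  nra.
Qed.

Lemma ND_near n a b sg d : 0 < sg -> incr n a ->
  exists delta, 0 < delta /\ forall h, Rabs h < delta -> ND n a b (line (xi0 sg) d h).
Proof.
  intros Hs Ha.
  destruct (fin_delta n (fun j h => forall i, (i < j)%nat -> 0 < dot2 (Dv n a b (line (xi0 sg) d h) i j) (Dv n a b (line (xi0 sg) d h) i j))) as [dl [Hdl H]].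
  - intros j Hj. apply fin_delta. intros i Hi.
    assert (Hx: (a i - a j) * sg <> 0).
    { specialize (Ha i j Hi Hj). apply Rmult_integral_contrapositive_currified; lra. }
    destruct (pair_delta _ (Dv n a b d i j) Hx) as [d0 [Hd0 H0]].
    exists d0; split; auto. intros h Hh. rewrite Dv_line, Dv_xi0. apply H0; auto.
  - exists dl; split; auto. intros h Hh i j Hij Hj. apply H; auto.
Qed.

Lemma ND_xi0 n a b sg : 0 < sg -> incr n a -> ND n a b (xi0 sg).
Proof.
  intros Hs Ha i j Hij Hj. rewrite Dv_xi0. unfold dot2; simpl.
  assert (Hx: (a i - a j) * sg <> 0).
  { specialize (Ha i j Hij Hj). apply Rmult_integral_contrapositive_currified; lra. }
  apply Rsqr_pos_lt in Hx. unfold Rsqr in Hx. nra.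
Qed.

Lemma mu_pos n m a : (2 <= n)%nat -> (forall i, (i < n)%nat -> 0 < m i) -> incr n a -> 0 < mu_cc n m a.
Proof.
  intros Hn Hm Ha. unfold mu_cc.
  assert (Hterm: forall j i, (i < j)%nat -> (j < n)%nat -> 0 < m i * m j / Rabs (a i - a j)).
  { intros j i Hij Hj. assert (a i < a j) by (apply Ha; auto).
    apply Rdiv_lt_0_compat; [apply Rmult_lt_0_compat; apply Hm; lia| apply Rabs_pos_lt; lra]. }
  eapply Rlt_le_trans; [| apply (sumR_ge n _ 1%nat); [lia|]].
  - eapply Rlt_le_trans; [| apply (sumR_ge 1 _ 0%nat); [lia|]].
    + apply Hterm; lia.
    + intros; left; apply Hterm; lia.
  - intros j Hj. apply sumR_nonneg. intros; left; apply Hterm; lia.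
Qed.

Lemma sg_facts mu p : 0 < mu -> 0 < p -> 0 < sigma_of mu p /\ sigma_of mu p ^ 4 = mu * p.
Proof.
  intros Hm Hp. unfold sigma_of.
  assert (H1: 0 < mu * p) by nra.
  assert (H2: 0 < sqrt (mu * p)) by (apply sqrt_lt_R0; auto).
  split; [apply sqrt_lt_R0; auto|].
  replace (sqrt (sqrt (mu * p)) ^ 4) with ((sqrt (sqrt (mu * p)) * sqrt (sqrt (mu * p))) * (sqrt (sqrt (mu * p)) * sqrt (sqrt (mu * p)))) by ring.
  rewrite sqrt_sqrt by lra. rewrite sqrt_sqrt by lra. reflexivity.
Qed.

Lemma Pp_zero_l n m a g f : (forall i j, f i j = 0) -> Pp n m a f g = 0.
Proof. intros H. unfold Pp. apply sumR_zero; intros; apply sumR_zero; intros. rewrite H; ring. Qed.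
Lemma Pp_zero_r n m a g f : (forall i j, f i j = 0) -> Pp n m a g f = 0.
Proof. intros H. rewrite Pp_sym. apply Pp_zero_l; auto. Qed.

Definition PV (mu : R) (lam : nat -> R) (j k : coord) : R :=
  match j, k with
  | cz _, cz _ => mu
  | cw l _, cw l' _ => (mu - lam l') * (if Nat.eqb l l' then 1 else 0)
  | _, _ => 0 end.

Lemma Pp_eval n m a b lam j k :
  (forall i, (i < n)%nat -> 0 < m i) -> incr n a -> is_central n m a ->
  (forall k i, (k < n - 2)%nat -> (i < n)%nat ->
     sumR n (fun j => Dmat n m a i j * b j k) = lam k * b i k) ->
  (forall k l, (k < n - 2)%nat -> (l < n - 2)%nat ->
     sumR n (fun i => m i * b i k * b i l) = if Nat.eqb k l then 1 else 0) ->
  (forall k, (k < n - 2)%nat -> sumR n (fun i => m i * a i * b i k) = 0) ->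
  valid (n - 2) j -> valid (n - 2) k ->
  Pp n m a (cf a b j) (cf a b k) = PV (mu_cc n m a) lam j k.
Proof.
  intros Hm Ha Hc He Ho Hab Hj Hk.
  destruct j as [c|l c|c|l c]; destruct k as [d|l' d|d|l' d]; simpl in Hj, Hk; unfold cf, PV;
  try solve [ apply Pp_zero_l; reflexivity | apply Pp_zero_r; reflexivity
    | apply S1; auto | apply S2; auto | rewrite Pp_sym; apply S2; auto
    | apply S3; auto; intros; apply He; auto ].
Qed.

Lemma Pp1_eval n m a b jj :
  (forall i, (i < n)%nat -> 0 < m i) -> incr n a -> is_central n m a ->
  (forall k, (k < n - 2)%nat -> sumR n (fun i => m i * a i * b i k) = 0) ->
  valid (n - 2) jj ->
  Pp n m a (fun i j => a i - a j) (cf a b jj) = match jj with cz _ => mu_cc n m a | _ => 0 end.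
Proof.
  intros Hm Ha Hc Hab Hj. destruct jj as [c|l c|c|l c]; simpl in Hj; unfold cf;
  first [ apply Pp_zero_r; reflexivity | apply S1; auto | apply S2; auto ].
Qed.

Ltac kill_eqb := repeat (match goal with |- context [Nat.eqb ?x ?y] => destruct (Nat.eqb x y) end).
Ltac zsum := intros; cbn beta; kill_eqb; unfold dot2, Jmul, z2, ec; simpl; ring.
Ltac csum1 := match goal with
  | |- context [sumR ?N ?F] => rewrite (sumR_zero N F) by zsum
  | H : (?l < ?N)%nat |- context [sumR ?N ?F] =>
      rewrite (sumR_one N F l H) by (let Hne := fresh in intros ? ? Hne; cbn beta;
         rewrite ?(proj2 (Nat.eqb_neq _ l) Hne); zsum); cbn beta; rewrite ?Nat.eqb_refl
  end.
Ltac csum := repeat csum1.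

Lemma r_pos e p th : 0 <= e < 1 -> 0 < p -> 0 < 1 + e * cos th.
Proof. intros He Hp. assert (-1 <= cos th <= 1) by apply COS_bound. nra. Qed.

Lemma Eval2 n m a b lam e p th j k :
  (2 <= n)%nat -> (forall i, (i < n)%nat -> 0 < m i) -> incr n a -> is_central n m a ->
  (forall k i, (k < n - 2)%nat -> (i < n)%nat ->
     sumR n (fun j => Dmat n m a i j * b j k) = lam k * b i k) ->
  (forall k l, (k < n - 2)%nat -> (l < n - 2)%nat ->
     sumR n (fun i => m i * b i k * b i l) = if Nat.eqb k l then 1 else 0) ->
  (forall k, (k < n - 2)%nat -> sumR n (fun i => m i * a i * b i k) = 0) ->
  0 <= e < 1 -> 0 < p ->
  valid (n - 2) j -> valid (n - 2) k ->
  D2H n m a b e p th (xi0 (sigma_of (mu_cc n m a) p)) (dir j) (dir k) =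
  hessB e th (fun l => - lam l / mu_cc n m a) j k.
Proof.
  intros Hn Hm Ha Hc He Ho Hab He1 Hp Hj Hk.
  assert (Hmu := mu_pos n m a Hn Hm Ha).
  destruct (sg_facts _ _ Hmu Hp) as [Hs Hs4].
  assert (Hr := r_pos e p th He1 Hp).
  unfold D2H. rewrite D2U_xi0 by auto. rewrite (Pp_eval n m a b lam) by auto.
  set (mu := mu_cc n m a) in *. set (sg := sigma_of mu p) in *.
  assert (Emu: mu = sg ^ 4 / p) by (rewrite Hs4; field; lra).
  clearbody sg mu. subst mu.
  unfold r_of.
  destruct j as [c|l c|c|l c]; destruct k as [d|l' d|d|l' d]; simpl in Hj, Hk; destruct c, d;
  unfold D2Q, PV, kap, hessB, ifeq, Hzz, Hww, deltac, mJent, Jent; cbn [dir sZ sW sz sw ecj]; csum.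
  all: try (destruct (Nat.eqb_spec l l'); [subst l'|]); rewrite ?Nat.eqb_refl.
  all: try rewrite (proj2 (Nat.eqb_neq l' l)) by auto.
  all: unfold dot2, Jmul, z2, ec; simpl.
  all: try (field; repeat split; lra).
Qed.

Lemma Eval1 n m a b e p th jj :
  (2 <= n)%nat -> (forall i, (i < n)%nat -> 0 < m i) -> incr n a -> is_central n m a ->
  (forall k, (k < n - 2)%nat -> sumR n (fun i => m i * a i * b i k) = 0) ->
  0 <= e < 1 -> 0 < p -> valid (n - 2) jj ->
  DH n m a b e p th (xi0 (sigma_of (mu_cc n m a) p)) (dir jj) = 0.
Proof.
  intros Hn Hm Ha Hc Hab He1 Hp Hj.
  assert (Hmu := mu_pos n m a Hn Hm Ha).
  destruct (sg_facts _ _ Hmu Hp) as [Hs Hs4].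
  assert (Hr := r_pos e p th He1 Hp).
  unfold DH. rewrite DU_xi0 by auto. rewrite (Pp1_eval n m a b) by auto.
  set (mu := mu_cc n m a) in *. set (sg := sigma_of mu p) in *.
  assert (Emu: mu = sg ^ 4 / p) by (rewrite Hs4; field; lra).
  clearbody sg mu. subst mu.
  unfold r_of.
  destruct jj as [c|l c|c|l c]; simpl in Hj; destruct c;
  unfold DQ, xi0; cbn [dir sZ sW sz sw ecj]; csum.
  all: unfold dot2, Jmul, z2, ec; simpl.
  all: field; repeat split; lra.
Qed.

Definition Fc (l : nat) : list coord := cW l Defs.C1 :: cW l Defs.C2 :: cw l Defs.C1 :: cw l Defs.C2 :: nil.
Definition l4 : list coord := cZ Defs.C1 :: cZ Defs.C2 :: cz Defs.C1 :: cz Defs.C2 :: nil.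
Lemma coords_eq N : coords N = l4 ++ flat_map Fc (seq 0 N).
Proof. reflexivity. Qed.
Lemma sumL_app L1 L2 f : sumL (L1 ++ L2) f = sumL L1 f + sumL L2 f.
Proof. induction L1; simpl; [ring|]. unfold sumL in *. simpl. rewrite IHL1. ring. Qed.
Lemma sumL_fm N f : sumL (flat_map Fc (seq 0 N)) f = sumR N (fun l => sumL (Fc l) f).
Proof. induction N; [reflexivity|]. rewrite seq_S, flat_map_app, sumL_app, IHN. simpl.
  unfold sumL; simpl. ring. Qed.
Lemma sumL_ext N f g : (forall j, valid N j -> f j = g j) -> sumL (coords N) f = sumL (coords N) g.
Proof.
  intros H. rewrite !coords_eq, !sumL_app, !sumL_fm. f_equal.
  - unfold sumL; simpl. rewrite !H by exact I. reflexivity.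
  - apply sumR_ext; intros l Hl. unfold sumL; simpl. rewrite !H by exact Hl. reflexivity.
Qed.

Definition blk (j : coord) : list coord :=
  match j with cZ _ | cz _ => l4 | cW l _ | cw l _ => Fc l end.

Lemma inner_eq N e th beta s j : valid N j ->
  sumL (coords N) (fun k => getx s j * hessB e th beta j k * getx s k) =
  sumL (blk j) (fun k => getx s j * hessB e th beta j k * getx s k).
Proof.
  intros Hv. rewrite coords_eq, sumL_app, sumL_fm.
  destruct j as [c|l c|c|l c]; simpl in Hv; simpl blk.
  - rewrite sumR_zero; [ring|]. intros; unfold sumL, Fc; simpl; destruct c; simpl; ring.
  - rewrite (sumR_one N _ l Hv).
    + unfold sumL, l4; simpl. ring.
    + intros l' _ Hne. unfold sumL, Fc; simpl; unfold ifeq. rewrite ?(proj2 (Nat.eqb_neq l l')) by auto. ring.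
  - rewrite sumR_zero; [ring|]. intros; unfold sumL, Fc; simpl; destruct c; simpl; ring.
  - rewrite (sumR_one N _ l Hv).
    + unfold sumL, l4; simpl. ring.
    + intros l' _ Hne. unfold sumL, Fc; simpl; unfold ifeq. rewrite ?(proj2 (Nat.eqb_neq l l')) by auto. ring.
Qed.

Lemma quad_eq N e th beta s : H2 N e th beta s = 1/2 * quad_form N (hessB e th beta) s.
Proof.
  unfold quad_form. rewrite (sumL_ext N _ (fun j => sumL (blk j) (fun k => getx s j * hessB e th beta j k * getx s k)))
    by (intros; apply inner_eq; auto).
  rewrite coords_eq, sumL_app, sumL_fm. unfold H2.
  assert (E: sumR N (fun l => 1 / 2 * dot2 (sW s l) (sW s l) + dot2 (sw s l) (Jmul (sW s l)) + 1 / 2 * qf2 (Hww e th (beta l)) (sw s l))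
     = 1/2 * sumR N (fun l => sumL (Fc l) (fun j => sumL (blk j) (fun k => getx s j * hessB e th beta j k * getx s k)))).
  { rewrite <- sumR_scal. apply sumR_ext; intros l Hl. unfold sumL, Fc, blk, hessB, ifeq; simpl. rewrite Nat.eqb_refl.
    unfold qf2, Hww, dot2, Jmul; simpl. unfold mJent, Jent, Rdiv; simpl. set (q := / (1 + e * cos th)). field. }
  rewrite E. unfold sumL, l4, blk, hessB, qf2, Hzz, dot2, Jmul; simpl. unfold mJent, Jent, Rdiv; simpl. set (q := / (1 + e * cos th)). field.
Qed.

Lemma r_deriv e p x : 0 <= e < 1 -> 0 < p ->
  derivable_pt_lim (fun y => r_of e p y) x (p * (e * sin x) / (1 + e * cos x) ^ 2).
Proof.
  intros He Hp. assert (Hr := r_pos e p x He Hp). unfold r_of. apply is_derive_Reals.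
  auto_derive; [lra|]. field. lra.
Qed.

Lemma G_deriv e p (c : Defs.comp) ai x : 0 <= e < 1 -> 0 < p ->
  derivable_pt_lim (fun y => getc c (scal2 (r_of e p y) (rot y (ai, 0)))) x
   (match c with Defs.C1 => p * (e * sin x) / (1 + e * cos x) ^ 2 * (cos x * ai) - r_of e p x * (sin x * ai)
            | Defs.C2 => p * (e * sin x) / (1 + e * cos x) ^ 2 * (sin x * ai) + r_of e p x * (cos x * ai) end).
Proof.
  intros He Hp. assert (Hr := r_pos e p x He Hp). unfold r_of, scal2, rot. apply is_derive_Reals.
  destruct c; simpl; auto_derive; try lra; field; lra.
Qed.

Lemma part1 n m a b e p theta :
  (forall i, (i < n)%nat -> 0 < m i) -> 0 < sigma_of (mu_cc n m a) p ->
  0 <= e < 1 -> 0 < p ->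
  (forall t, derivable_pt_lim theta t
     (sigma_of (mu_cc n m a) p ^ 2 / r_of e p (theta t) ^ 2)) ->
  let sg := sigma_of (mu_cc n m a) p in
  (forall t, exists rd,
     derivable_pt_lim (fun s => r_of e p (theta s)) t rd /\
     forall i, (i < n)%nat ->
       q_of n a b sg (r_of e p (theta t)) (theta t) (xi0 sg) i
         = scal2 (r_of e p (theta t)) (rot (theta t) (a i, 0)) /\
       forall c, derivable_pt_lim
                   (fun s => getc c (scal2 (r_of e p (theta s)) (rot (theta s) (a i, 0)))) t
                   (getc c (p_of n m a b sg (r_of e p (theta t)) rd (theta t) (xi0 sg) i) / m i)).
Proof.
  intros Hm Hs He Hp Hth sg t.
  set (th' := sg ^ 2 / r_of e p (theta t) ^ 2).
  set (x := theta t).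
  assert (Hr := r_pos e p x He Hp).
  exists (p * (e * sin x) / (1 + e * cos x) ^ 2 * th').
  split.
  { apply (derivable_pt_lim_comp theta (fun y => r_of e p y)); [apply Hth| apply r_deriv; auto]. }
  intros i Hi. split.
  - unfold q_of, unbar_pos, xi0, sum2, add2, scal2, rot; cbn [sz sw fst snd].
    apply pair_eq; simpl; rewrite sumR_zero by (intros; unfold Rdiv; ring); unfold sg in *; field; lra.
  - intros c. assert (Hmi := Hm i Hi).
    eapply dpl_eq.
    + apply (derivable_pt_lim_comp theta (fun y => getc c (scal2 (r_of e p y) (rot y (a i, 0))))); [apply Hth| apply G_deriv; auto].
    + fold x. fold sg. fold th'. unfold th'.
      unfold p_of, unbar_mom, xi0, sum2, add2, scal2, rot; cbn [sz sw sZ sW fst snd].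
      rewrite !sumR_zero by (intros; unfold Rdiv; ring).
      unfold r_of in *. change (theta t) with x. assert (Hsg: 0 < sg) by exact Hs. clearbody sg x. destruct c; simpl; field; repeat split; lra.
Qed.

End Helpers.
Import Helpers.

Theorem theorem2p3 (n : nat) (m a : nat -> R) (b : nat -> nat -> R) (lam : nat -> R)
    (e p : R) (theta : R -> R) :
  (2 <= n)%nat ->
  (forall i, (i < n)%nat -> 0 < m i) ->
  sumR n m = 1 ->
  (forall i j, (i < j)%nat -> (j < n)%nat -> a i < a j) ->
  sumR n (fun i => m i * a i) = 0 ->
  sumR n (fun i => m i * a i ^ 2) = 1 ->
  is_central n m a ->
  (* v_{k+3} = (b_{1,k},...,b_{n,k}) eigenvectors of D for lambda_{k+3} *)
  (forall k i, (k < n - 2)%nat -> (i < n)%nat ->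
     sumR n (fun j => Dmat n m a i j * b j k) = lam k * b i k) ->
  (* M-orthonormality v_i^T M v_j = delta_ij *)
  (forall k l, (k < n - 2)%nat -> (l < n - 2)%nat ->
     sumR n (fun i => m i * b i k * b i l) = if Nat.eqb k l then 1 else 0) ->
  (forall k, (k < n - 2)%nat -> sumR n (fun i => m i * b i k) = 0) ->
  (forall k, (k < n - 2)%nat -> sumR n (fun i => m i * a i * b i k) = 0) ->
  (* 0 >= lambda_3 >= ... >= lambda_n *)
  (forall k, (k < n - 2)%nat -> lam k <= 0) ->
  (forall k, (S k < n - 2)%nat -> lam (S k) <= lam k) ->
  0 <= e < 1 -> 0 < p ->
  (* true anomaly: r^2 theta' = sigma^2 *)
  (forall t, derivable_pt_lim theta t
     (sigma_of (mu_cc n m a) p ^ 2 / r_of e p (theta t) ^ 2)) ->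
  let mu := mu_cc n m a in
  let sg := sigma_of mu p in
  let N := (n - 2)%nat in
  let beta := fun l => - lam l / mu in
  (* (1) the elliptic Euler-Moulton solution q_i(t) = r(t) R(theta(t)) a_i, p_i = m_i q_i'
         is the image of the constant state xi_0 *)
  (forall t, exists rd,
     derivable_pt_lim (fun s => r_of e p (theta s)) t rd /\
     forall i, (i < n)%nat ->
       q_of n a b sg (r_of e p (theta t)) (theta t) (xi0 sg) i
         = scal2 (r_of e p (theta t)) (rot (theta t) (a i, 0)) /\
       forall c, derivable_pt_lim
                   (fun s => getc c (scal2 (r_of e p (theta s)) (rot (theta s) (a i, 0)))) t
                   (getc c (p_of n m a b sg (r_of e p (theta t)) rd (theta t) (xi0 sg) i) / m i))
  (* (2) xi_0 is a (constant) solution of Hamilton's equations of Hbar *)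
  /\ is_ham_solution (Hbar n m a b e p) N (fun _ => xi0 sg)
  (* (3) the Hessian of Hbar(theta, .) at xi_0 is B(theta) *)
  /\ (forall th j k, valid N j -> valid N k ->
        second_partial_is (Hbar n m a b e p th) (xi0 sg) k j (hessB e th beta j k))
  (* (4) the corresponding quadratic Hamiltonian is H_2 *)
  /\ (forall th s, H2 N e th beta s = 1/2 * quad_form N (hessB e th beta) s).
Proof.
  intros Hn Hm Hsum Ha Hcm Hcm2 Hc He Ho Hb Hab Hl1 Hl2 He1 Hp Hth.
  cbv zeta.
  assert (Hinc : incr n a) by exact Ha.
  assert (Hmu := mu_pos n m a Hn Hm Hinc).
  destruct (sg_facts _ _ Hmu Hp) as [Hs Hs4].
  split; [| split; [| split]].
  - apply (part1 n m a b e p theta Hm Hs He1 Hp Hth).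
  - intros th j Hj. exists 0. split.
    + unfold partial_is. cbv beta.
      apply dpl_ext with (f := fun h => Hbar n m a b e p th (line (xi0 (sigma_of (mu_cc n m a) p)) (dir (conjc j)) h));
        [| intros; rewrite shift_line; reflexivity].
      apply (dpl_eq _ _ _ (DH n m a b e p th (xi0 (sigma_of (mu_cc n m a) p)) (dir (conjc j)))).
      { apply DH_ok; apply ND_xi0; auto. }
      apply Eval1; auto. destruct j; simpl in *; auto.
    + rewrite Rmult_0_r. apply dpl_const.
  - intros th j k Hj Hk. unfold second_partial_is.
    destruct (ND_near n a b (sigma_of (mu_cc n m a) p) (dir k) Hs Hinc) as [delta [Hd HND]].
    exists delta; split; auto.
    exists (fun h => DH n m a b e p th (line (xi0 (sigma_of (mu_cc n m a) p)) (dir k) h) (dir j)). split.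
    + intros h Hh. unfold partial_is. rewrite (shift_line _ k h).
      apply dpl_ext with (f := fun h0 => Hbar n m a b e p th (line (line (xi0 (sigma_of (mu_cc n m a) p)) (dir k) h) (dir j) h0));
        [apply DH_ok; apply HND; auto | intros; rewrite shift_line; reflexivity].
    + apply (dpl_eq _ _ _ (D2H n m a b e p th (xi0 (sigma_of (mu_cc n m a) p)) (dir j) (dir k))).
      { apply D2H_ok; apply ND_xi0; auto. }
      apply Eval2; auto.
  - intros th s. apply quad_eq.
Qed.
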